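(* Let $X$ be a locally compact Hausdorff space and let $\mathcal{E}\to X$ be an (F) Banach bundle over $X$. If $\mathcal{E}$ is boundedly unitarizable, then it is $0$-boundedly unitarizable.
   Context: Fix a ground field $\mathbb{F}\in\{\mathbb{R},\mathbb{C}\}$. A Banach bundle over a topological space $X$ is a continuous open surjection $\pi:\mathcal{E}\to X$ together with a Banach-space structure on each fiber $\mathcal{E}_x=\pi^{-1}(x)$ such that scalar multiplication $\mathbb{F}\times\mathcal{E}\to\mathcal{E}$ and addition $\{(p,q)\in\mathcal{E}^2:\pi(p)=\pi(q)\}\to\mathcal{E}$ are continuous, the norm $\mathcal{E}\to\mathbb{R}_{\ge0}$ is continuous (an (F) bundle) or upper semicontinuous (an (H) bundle), and for every $x\in X$ the sets $\{p\in\mathcal{E}:\pi(p)\in U,\ \|p\|<\varepsilon\}$ ($U$ an open neighbourhood of $x$, $\varepsilon>0$) form a fundamental system of neighbourhoods of $0_x$ in $\mathcal{E}$. A Hilbert bundle is a Banach bundle all of whose fiber norms come from inner products. A section is a continuous $s:X\to\mathcal{E}$ with $\pi\circ s=\mathrm{id}$; $\Gamma_b(\mathcal{E})$ denotes the bounded sections with the supremum norm, and (for locally compact $X$) $\Gamma_0(\mathcal{E})$ the sections $s$ with $x\mapsto\|s(x)\|$ vanishing at infinity. A renorming of $\mathcal{E}$ into a Banach bundle $\mathcal{E}'\to X$ is a homeomorphism $\Phi:\mathcal{E}\to\mathcal{E}'$ with $\pi'\circ\Phi=\pi$ which is linear on each fiber; when $\mathcal{E}$ is (F), $\mathcal{E}'$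 is required to be (F) as well. $\mathcal{E}$ is boundedly unitarizable if there is a renorming $\Phi$ into a Hilbert bundle $\mathcal{E}'$ such that $s\mapsto\Phi\circ s$ maps $\Gamma_b(\mathcal{E})$ bijectively onto $\Gamma_b(\mathcal{E}')$ and is a topological isomorphism for the supremum norms. $\mathcal{E}$ is $0$-boundedly unitarizable if the same holds with $\Gamma_0$ in place of $\Gamma_b$. *)

(* Defs.v *)
From HB Require Import structures.
From mathcomp Require Import all_boot all_order all_algebra.
From mathcomp Require Import all_classical all_reals all_analysis.
From mathcomp Require Export complex.
Set Implicit Arguments. Unset Strict Implicit. Unset Printing Implicit Defensive.
Import Order.TTheory GRing.Theory Num.Theory.
Export numFieldTopology.Exports numFieldNormedType.Exports.
Local Open Scope classical_set_scope.
Local Open Scope ring_scope.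

(* The raw data of a Banach bundle pi : E -> X over the scalar field K:
   the projection, the zero of each fiber, fiberwise addition and scalar
   multiplication (only meaningful on fibers), and the norm.  Norms are
   real, but are stored in K (which is R or C) with 0 <= nrm p. *)
Record bundle_data (K : numFieldType) (X E : Type) := BundleData {
  bproj  : E -> X;
  bzero  : X -> E;
  badd   : E -> E -> E;
  bscale : K -> E -> E;
  bnorm  : E -> K }.

Section Bundles.
Variables (K : numFieldType) (X : topologicalType).

Section OneBundle.
Variables (E : topologicalType) (B : bundle_data K X E).
Local Notation pi := (bproj B).
Local Notation z := (bzero B).
Local Notation add := (badd B).
Local Notation scl := (bscale B).
Local Notation nrm := (bnorm B).
Local Notation sub p q := (add p (scl (-1) q)).

Definition fiber_vector_space (x : X) : Prop :=
  [/\ pi (z x) = x,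
      (forall p q, pi p = x -> pi q = x -> pi (add p q) = x),
      (forall a p, pi p = x -> pi (scl a p) = x),
      (forall p q r, pi p = x -> pi q = x -> pi r = x ->
         add p (add q r) = add (add p q) r /\ add p q = add q p) &
      (forall p, pi p = x -> add (z x) p = p /\
         exists2 q, pi q = x & add p q = z x)] /\
  (forall a b p q, pi p = x -> pi q = x ->
      [/\ scl 1 p = p, scl a (scl b p) = scl (a * b) p,
          scl (a + b) p = add (scl a p) (scl b p) &
          scl a (add p q) = add (scl a p) (scl a q)]).

Definition fiber_norm (x : X) : Prop :=
  forall a p q, pi p = x -> pi q = x ->
    [/\ 0 <= nrm p, (nrm p = 0 -> p = z x),
        nrm (scl a p) = `|a| * nrm p & nrm (add p q) <= nrm p + nrm q].

Definition fiber_complete (x : X) : Prop :=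
  forall u : nat -> E, (forall n, pi (u n) = x) ->
    (forall e : K, 0 < e -> exists N, forall m n, (N <= m)%N -> (N <= n)%N ->
        nrm (sub (u m) (u n)) < e) ->
    exists2 p, pi p = x &
      forall e : K, 0 < e -> exists N, forall n, (N <= n)%N -> nrm (sub (u n) p) < e.

Definition fibers_banach : Prop :=
  forall x, [/\ fiber_vector_space x, fiber_norm x & fiber_complete x].

(* topological axioms of a Banach bundle, with continuous norm ((F) bundle) *)
Definition F_bundle_topology : Prop :=
  [/\ continuous pi,
      (forall U : set E, open U -> open (pi @` U)),
      (forall x : X, exists p, pi p = x),
      continuous (fun ap : K * E => scl ap.1 ap.2) &
      {within [set pq : E * E | pi pq.1 = pi pq.2],
         continuous (fun pq : E * E => add pq.1 pq.2)}] /\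
  continuous nrm /\
  (forall x : X,
     (forall (U : set X) (e : K), open U -> U x -> 0 < e ->
        nbhs (z x) [set p | U (pi p) /\ nrm p < e]) /\
     (forall W : set E, nbhs (z x) W ->
        exists U : set X, exists2 e : K, [/\ open U, U x & 0 < e] &
          [set p | U (pi p) /\ nrm p < e] `<=` W)).

Definition F_banach_bundle : Prop := fibers_banach /\ F_bundle_topology.

(* complex (or real) conjugation: |k|^2 / k = conj k for K = R or C *)
Definition conjK (k : K) : K := `|k| ^+ 2 / k.

Definition hilbert_fibers : Prop :=
  forall x : X, exists ip : E -> E -> K,
    forall a p q r, pi p = x -> pi q = x -> pi r = x ->
      [/\ ip p p = nrm p ^+ 2,
          ip (add p q) r = ip p r + ip q r,
          ip (scl a p) r = a * ip p r &
          ip q p = conjK (ip p q)].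

Definition F_hilbert_bundle : Prop := F_banach_bundle /\ hilbert_fibers.

Definition is_section (s : X -> E) : Prop := continuous s /\ forall x, pi (s x) = x.

Definition Gamma_b (s : X -> E) : Prop :=
  is_section s /\ exists c : K, forall x, nrm (s x) <= c.

Definition Gamma_0 (s : X -> E) : Prop :=
  is_section s /\
  forall e : K, 0 < e -> exists C : set X, compact C /\
    forall x, ~ C x -> nrm (s x) < e.

End OneBundle.

Definition renorming (E E' : topologicalType) (B : bundle_data K X E)
  (B' : bundle_data K X E') (Phi : E -> E') : Prop :=
  [/\ continuous Phi,
      (exists2 Psi : E' -> E, continuous Psi & cancel Phi Psi /\ cancel Psi Phi),
      (forall p, bproj B' (Phi p) = bproj B p),
      (forall p q, bproj B p = bproj B q ->
         Phi (badd B p q) = badd B' (Phi p) (Phi q)) &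
      (forall a p, Phi (bscale B a p) = bscale B' a (Phi p))].

(* s |-> Phi \o s maps the section space G bijectively onto G' and is a
   topological isomorphism for the sup norms (bounded with bounded inverse) *)
Definition induced_iso (E E' : topologicalType) (B : bundle_data K X E)
  (B' : bundle_data K X E') (G : (X -> E) -> Prop) (G' : (X -> E') -> Prop)
  (Phi : E -> E') : Prop :=
  [/\ (forall s, G s -> G' (Phi \o s)),
      (forall s1 s2, G s1 -> G s2 -> Phi \o s1 = Phi \o s2 -> s1 = s2),
      (forall t, G' t -> exists2 s, G s & Phi \o s = t),
      (exists2 C : K, 0 <= C & forall s, G s -> forall c : K,
          (forall x, bnorm B (s x) <= c) ->
          forall x, bnorm B' (Phi (s x)) <= C * c) &
      (exists2 C : K, 0 <= C & forall s, G s -> forall c : K,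
          (forall x, bnorm B' (Phi (s x)) <= c) ->
          forall x, bnorm B (s x) <= C * c)].

Definition boundedly_unitarizable (E : topologicalType) (B : bundle_data K X E)
  : Prop :=
  exists (E' : topologicalType) (B' : bundle_data K X E') (Phi : E -> E'),
    [/\ F_hilbert_bundle B', renorming B B' Phi &
        induced_iso B B' (Gamma_b B) (Gamma_b B') Phi].

Definition zero_boundedly_unitarizable (E : topologicalType)
  (B : bundle_data K X E) : Prop :=
  exists (E' : topologicalType) (B' : bundle_data K X E') (Phi : E -> E'),
    [/\ F_hilbert_bundle B', renorming B B' Phi &
        induced_iso B B' (Gamma_0 B) (Gamma_0 B') Phi].

End Bundles.

(* Main.v *)
Require Import Defs.
From mathcomp Require Import all_boot all_order all_algebra.
From mathcomp Require Import all_classical all_reals all_analysis.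
Import numFieldTopology.Exports numFieldNormedType.Exports.
Local Open Scope classical_set_scope.
Import Order.TTheory GRing.Theory Num.Theory.

Module Aux.
Local Open Scope ring_scope.
Section S.
Variables (K : numFieldType) (X : topologicalType).

Lemma cont_f (E : topologicalType) (B : bundle_data K X E) (s : X -> E) (e : K) :
  0 < e -> (forall p, 0 <= bnorm B p) -> continuous (bnorm B) -> continuous s ->
  continuous (fun x => e / (e + bnorm B (s x))).
Proof.
move=> e0 n0 cn cs x.
have hn : e + bnorm B (s x) != 0.
  by rewrite gt_eqF // ltr_pwDl.
apply: cvgM; first exact: cvg_cst.
apply: (cvgV hn).
apply: cvgD; first exact: cvg_cst.
exact: (continuous_comp (cs x) (cn (s x))).
Qed.

Lemma cont_scl (E : topologicalType) (B : bundle_data K X E) (s : X -> E) (f : X -> K) :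
  continuous (fun ap : K * E => bscale B ap.1 ap.2) -> continuous f -> continuous s ->
  continuous (fun x => bscale B (f x) (s x)).
Proof.
move=> cS cf cs x.
have := @continuous_comp X (K * E)%type E (fun x => (f x, s x)) (fun ap : K * E => bscale B ap.1 ap.2) x.
apply.
  exact: (cvg_pair (cf x) (cs x)).
exact: cS.
Qed.

Lemma vanish (E1 E2 : topologicalType) (B1 : bundle_data K X E1) (B2 : bundle_data K X E2)
  (Th : E1 -> E2) (C : K) :
  (forall a p, 0 <= bnorm B1 p /\ bnorm B1 (bscale B1 a p) = `|a| * bnorm B1 p) ->
  (forall a b p, bscale B1 a (bscale B1 b p) = bscale B1 (a * b) p) ->
  (forall p, bscale B1 1 p = p) ->
  (forall a p, bproj B1 (bscale B1 a p) = bproj B1 p) ->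
  continuous (fun ap : K * E1 => bscale B1 ap.1 ap.2) ->
  continuous (bnorm B1) ->
  (forall a p, Th (bscale B1 a p) = bscale B2 a (Th p)) ->
  (forall a q, bnorm B2 (bscale B2 a q) = `|a| * bnorm B2 q) ->
  0 <= C ->
  (forall u, Gamma_b B1 u -> forall c, (forall x, bnorm B1 (u x) <= c) ->
     forall x, bnorm B2 (Th (u x)) <= C * c) ->
  forall s, Gamma_0 B1 s -> forall e0 : K, 0 < e0 ->
  exists Cs : set X, compact Cs /\ forall x, ~ Cs x -> bnorm B2 (Th (s x)) < e0.
Proof.
move=> hn hss hs1 hsp cS cn hTh hn2 C0 hb s [[cs ps] s0] e0 e00.
have D0 : 0 < C *+ 2 + 1 by rewrite ltr_wpDl // mulrn_wge0.
pose e := e0 / (C *+ 2 + 1).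
have e0p : 0 < e by rewrite divr_gt0.
have [Cs [cCs hCs]] := s0 e e0p.
exists Cs; split => // x nx.
have nn : forall y, 0 <= bnorm B1 y.
  by move=> y; case: (hn 1 y).
pose f := fun x => e / (e + bnorm B1 (s x)).
pose u := fun x => bscale B1 (f x) (s x).
have fpos : forall y, 0 < f y by move=> y; rewrite divr_gt0 // ltr_pwDl.
have ub : forall y, bnorm B1 (u y) <= e.
  move=> y; rewrite /u (hn _ _).2 ger0_norm; last exact: ltW.
  rewrite /f mulrAC ler_pdivrMr; last by rewrite ltr_pwDl.
  by rewrite ler_pM2l // lerDr ltW.
have ug : Gamma_b B1 u.
  split; last by exists e.
  split; last by move=> y; rewrite /u hsp ps.
  rewrite /u; apply: cont_scl => //.
  exact: cont_f.
have hu := hb u ug e ub x.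
have ne : e + bnorm B1 (s x) != 0 by rewrite gt_eqF // ltr_pwDl.
have se : s x = bscale B1 ((e + bnorm B1 (s x)) / e) (u x).
  rewrite /u hss /f mulrA divfK; last by rewrite gt_eqF.
  by rewrite divff // hs1.
have ap : 0 <= (e + bnorm B1 (s x)) / e.
  by apply: divr_ge0; [apply: addr_ge0; [exact: ltW|exact: nn]|exact: ltW].
rewrite se hTh hn2 ger0_norm //.
have hlt := hCs x nx.
apply: (le_lt_trans (ler_wpM2l ap hu)).
rewrite [C * e]mulrC mulrA divfK; last by rewrite gt_eqF.
apply: (le_lt_trans (y := (e + e) * C)).
  by apply: ler_wpM2r => //; rewrite lerD2l ltW.
have E : e0 = e * (C *+ 2 + 1) by rewrite /e divfK // gt_eqF.
rewrite E -mulr2n mulrnAl -mulrnAr ltr_pM2l // ltrDl.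
exact: ltr01.
Qed.

Lemma fb_facts (E : topologicalType) (B : bundle_data K X E) : fibers_banach B ->
  [/\ (forall a p, 0 <= bnorm B p /\ bnorm B (bscale B a p) = `|a| * bnorm B p),
      (forall a b p, bscale B a (bscale B b p) = bscale B (a * b) p),
      (forall p, bscale B 1 p = p) &
      (forall a p, bproj B (bscale B a p) = bproj B p)].
Proof.
move=> fb; split.
- move=> a p; have [_ hn _] := fb (bproj B p).
  by have [] := hn a p p erefl erefl.
- move=> a b p; have [[_ hv] _ _] := fb (bproj B p).
  by have [] := hv a b p p erefl erefl.
- move=> p; have [[_ hv] _ _] := fb (bproj B p).
  by have [] := hv 1 1 p p erefl erefl.
- move=> a p; have [[[_ _ hp _ _] _] _ _] := fb (bproj B p).
  exact: hp.
Qed.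

Lemma main (E : topologicalType) (B : bundle_data K X E) :
  F_banach_bundle B -> boundedly_unitarizable B -> zero_boundedly_unitarizable B.
Proof.
move=> [fb [[cpi _ _ cS _] [cn _]]] [E' [B' [Phi [hil ren iso]]]].
have [[fb' [[_ _ _ cS' _] [cn' _]]] _] := hil.
have [cPhi [Psi cPsi [PsiK PhiK]] hproj hadd hscl] := ren.
have [i1 i2 i3 [C1 C10 h4] [C2 C20 h5]] := iso.
have [hn hss hs1 hsp] := @fb_facts _ _ fb.
have [hn' hss' hs1' hsp'] := @fb_facts _ _ fb'.
have hPsi : forall a q, Psi (bscale B' a q) = bscale B a (Psi q).
  by move=> a q; rewrite -[q]PhiK -hscl !PsiK.
have hprojPsi : forall q, bproj B (Psi q) = bproj B' q.
  by move=> q; rewrite -hproj PhiK.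
have inj : forall s1 s2 : X -> E, Phi \o s1 = Phi \o s2 -> s1 = s2.
  move=> s1 s2 H; apply: funext => x; rewrite -[s1 x]PsiK -[s2 x]PsiK.
  by congr Psi; exact: (congr1 (fun g => g x) H).
exists E', B', Phi; split => //; split.
- move=> s s0; have [[cs ps] _] := s0; split.
    split; last by move=> x /=; rewrite hproj ps.
    by move=> x; apply: continuous_comp; [exact: cs|exact: cPhi].
  apply: (@vanish _ _ B B' Phi C1) => //; by move=> a q; rewrite (hn' a q).2.
- move=> s1 s2 _ _; exact: inj.
- move=> t t0; exists (Psi \o t); last by apply: funext => x /=; rewrite PhiK.
  have [[ct pt] _] := t0; split.
    split; last by move=> x /=; rewrite hprojPsi pt.
    by move=> x; apply: continuous_comp; [exact: ct|exact: cPsi].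
  apply: (@vanish _ _ B' B Psi C2) => //; try by move=> a q; rewrite (hn a q).2.
  move=> u ug c uc x.
    have [s sg sE] := i3 u ug.
    have -> : Psi (u x) = s x by rewrite -sE /= PsiK.
    apply: (h5 s sg c) => y; have := uc y; by rewrite -sE.
- exists C1 => // s [sec _] c sc; apply: h4 => //; split => //; by exists c.
- exists C2 => // s [[cs ps] _] c sc.
  have gb : Gamma_b B' (Phi \o s).
    split; last by exists c.
    split; last by move=> x /=; rewrite hproj ps.
    by move=> x; apply: continuous_comp; [exact: cs|exact: cPhi].
  have [s' s'g s'E] := i3 _ gb.
  have <- := inj _ _ s'E.
  apply: h5 => // y; rewrite -/((Phi \o s') y) s'E; exact: sc.
Qed.
End S.

End Aux.

Theorem lemma1p2 (R : realType) :
  (forall (X : topologicalType), hausdorff_space X -> locally_compact [set: X] ->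
   forall (E : topologicalType) (B : bundle_data R X E),
     F_banach_bundle B -> boundedly_unitarizable B ->
     zero_boundedly_unitarizable B) /\
  (forall (X : topologicalType), hausdorff_space X -> locally_compact [set: X] ->
   forall (E : topologicalType) (B : bundle_data R[i] X E),
     F_banach_bundle B -> boundedly_unitarizable B ->
     zero_boundedly_unitarizable B).
Proof.
split=> X _ _ E B; exact: Aux.main.
Qed.
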